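(* Let $D=\mathrm{diag}(1,-1,1,-1,\ldots)=(1,-x)$, $\mathbb{F}^{\rm S}=(1,x(1+x))$, $\mathbb{L}^{\rm S}=(1+2x,x(1+x))$, and write $D(\mathbb{F}^{\rm S})^{-1}D=[r_{ij}]_{i,j\ge0}$ and $D(\mathbb{L}^{\rm S})^{-1}D=[q_{ij}]_{i,j\ge0}$. Then: (a) $r_{00}=1$, and for $i=1,2,\ldots$ and $j=2,3,\ldots$: $r_{i0}=0$, $r_{i1}=\frac{1}{i}\binom{2i-2}{i-1}$, and $r_{ij}=-r_{i-1,j-2}+r_{i,j-1}$. (b) $q_{i0}=\binom{2i}{i}$ for $i=0,1,2,\ldots$; $q_{i1}=\frac12\binom{2i}{i}$ for $i=1,2,\ldots$; and $q_{ij}=-q_{i-1,j-2}+q_{i,j-1}$ for $i=1,2,\ldots$, $j=2,3,\ldots$.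
   Context: All matrices are infinite with rows and columns indexed by $0,1,2,\ldots$. For formal power series $g(x)=g_0+g_1x+\cdots$ with $g_0\ne0$ and $f(x)=f_1x+f_2x^2+\cdots$ with $f_1\ne0$, $(g(x),f(x))$ denotes the (Riordan) infinite lower triangular matrix whose $j$-th column has generating function $g(x)f(x)^j$. These matrices form a group under matrix multiplication with $(g,f)(h,l)=(g\cdot h(f),l(f))$. *)

(* Defs.v *)
From HB Require Import structures.
From mathcomp Require Import all_boot all_order all_algebra.
Set Implicit Arguments. Unset Strict Implicit. Unset Printing Implicit Defensive.
Import Order.TTheory GRing.Theory Num.Theory.
Local Open Scope ring_scope.

Definition imx := nat -> nat -> rat.

Definition lower_tri (A : imx) : Prop := forall i j, (i < j)%N -> A i j = 0.

(* Product of infinite matrices whose left factor is lower triangular: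
   (AB)_{ij} = sum_{k} A_{ik} B_{kj} = sum_{k <= i} A_{ik} B_{kj}. *)
Definition imul (A B : imx) : imx := fun i j => \sum_(k < i.+1) A i k * B k j.

Definition iid : imx := fun i j => (i == j)%:R.

(* Riordan array (g, f): column j has generating function g f^j.
   All series in the statement are polynomials. *)
Definition riordan (g f : {poly rat}) : imx := fun i j => (g * f ^+ j)`_i.

Definition is_inverse (A B : imx) : Prop :=
  lower_tri B /\ (forall i j, imul A B i j = iid i j) /\ (forall i j, imul B A i j = iid i j).

Definition Dmx : imx := riordan 1 (- 'X).
Definition FS : imx := riordan 1 ('X * (1 + 'X)).
Definition LS : imx := riordan (1 + 2%:R *: 'X) ('X * (1 + 'X)).

(* Main.v *)
Require Import Defs.
From mathcomp Require Import all_boot all_order all_algebra.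
From mathcomp Require Import zify ring.
Import GRing.Theory Num.Theory.
Local Open Scope ring_scope.

Lemma imulE (A B : imx) i j : imul A B i j = \sum_(0 <= k < i.+1) A i k * B k j.
Proof. by rewrite /imul big_mkord. Qed.

Lemma sum_delta (F : nat -> rat) n j :
  \sum_(0 <= k < n) F k * (k == j)%:R = if (j < n)%N then F j else 0.
Proof.
elim: n => [|n IH]; first by rewrite big_geq.
rewrite big_nat_recr //= IH.
case: (ltngtP j n) => h.
- by rewrite ltnS (ltnW h) mulr0 addr0.
- by rewrite ltnS leqNgt h mulr0 addr0.
- by rewrite ?h ?ltnn ?ltnSn ?eqxx mulr1 add0r.
Qed.

Lemma DmxE i j : Dmx i j = (-1) ^+ j * (i == j)%:R.
Proof.
have e : (-1 : {poly rat}) ^+ j = ((-1) ^+ j)%:P by rewrite rmorphXn /= polyCN polyC1.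
by rewrite /Dmx /riordan mul1r [(- 'X) ^+ j]exprNn e coefCM coefXn.
Qed.

Lemma conjD (B : imx) : lower_tri B -> forall i j,
  imul (imul Dmx B) Dmx i j = (-1) ^+ (i + j) * B i j.
Proof.
move=> lB i j; rewrite imulE.
have E : forall k, imul Dmx B i k = (-1) ^+ i * B i k.
  move=> k; rewrite imulE.
  rewrite (eq_bigr (fun l => ((-1) ^+ l * B l k) * (l == i)%:R)).
    by rewrite sum_delta ltnSn.
  by move=> l _; rewrite DmxE eq_sym; ring.
rewrite (eq_bigr (fun k => ((-1) ^+ i * B i k * (-1) ^+ j) * (k == j)%:R)); last first.
  by move=> k _; rewrite E DmxE; ring.
rewrite sum_delta ltnS exprD; case: leqP => h.
  by ring.
by rewrite lB // !mulr0.
Qed.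

Section Gen.
Variables (A B : imx).
Hypotheses (lA : lower_tri A) (dA : forall i, A i i = 1)
  (A1 : forall j, A 1%N j.+1 = A 0%N j)
  (A2 : forall i j, A i.+2 j.+1 = A i.+1 j + A i j)
  (lB : lower_tri B) (AB : forall i j, imul A B i j = iid i j).

Let w j k := B k j.+1 + B k j.+2 - (if k is k'.+1 then B k' j else 0).

Lemma Aw j m : \sum_(0 <= k < m.+1) A m k * w j k = 0.
Proof.
under eq_bigr => k _ do rewrite /w mulrBr mulrDr.
rewrite sumrB big_split /= -!imulE !AB.
case: m => [|m].
  by rewrite big_nat1 mulr0 /iid /= subr0 addr0.
rewrite big_nat_recl // mulr0 add0r.
case: m => [|m].
  have H := AB 0%N j; rewrite imulE big_nat1 in H.
  rewrite big_nat1 A1 H /iid /= !eqSS.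
  clear H; by case: j => [|j] //=; rewrite ?subrr // addr0 subrr.
under eq_bigr => k _ do rewrite A2 mulrDl.
rewrite big_split /= -imulE AB big_nat_recr //= (@lA _ _ (ltnSn _)) mul0r addr0 -imulE AB.
by rewrite /iid !eqSS subrr.
Qed.

Lemma w0 j k : w j k = 0.
Proof.
elim/ltn_ind: k => k IH.
have := Aw j k; rewrite big_nat_recr //= dA mul1r big1_seq ?add0r //.
move=> i; rewrite mem_index_iota => /andP[_ h]; by rewrite IH ?mulr0.
Qed.

Lemma Brec i j : B i.+1 j.+1 + B i.+1 j.+2 = B i j.
Proof. by have := w0 j i.+1; rewrite /w => /eqP; rewrite subr_eq0 => /eqP. Qed.

End Gen.

Section Rio.
Variable g : {poly rat}.
Let h : {poly rat} := 'X * (1 + 'X).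

Lemma rlower : lower_tri (riordan g h).
Proof.
move=> i j ij; rewrite /riordan /h exprMn mulrCA mulrC coefMXn ij //.
Qed.

Lemma rdiag : g`_0 = 1 -> forall i, riordan g h i i = 1.
Proof.
move=> g0 i; rewrite /riordan /h exprMn mulrCA mulrC coefMXn ltnn subnn coef0M g0 mul1r.
elim: i => [|i IH]; first by rewrite expr0 coef1.
by rewrite exprS coef0M IH mulr1 coefD coef1 coefX addr0.
Qed.

Lemma hsplit (p : {poly rat}) : p * h = p * 'X + p * 'X * 'X.
Proof. by rewrite /h mulrA mulrDr mulr1. Qed.

Lemma rA1 j : riordan g h 1%N j.+1 = riordan g h 0%N j.
Proof. by rewrite /riordan exprSr mulrA hsplit coefD !coefMX /= addr0. Qed.

Lemma rA2 i j : riordan g h i.+2 j.+1 = riordan g h i.+1 j + riordan g h i j.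
Proof. by rewrite /riordan exprSr mulrA hsplit coefD !coefMX /=. Qed.

Lemma rcol0 k : riordan g h k 0%N = g`_k.
Proof. by rewrite /riordan expr0 mulr1. Qed.

End Rio.

Lemma col0 (A B : imx) (a : rat) :
  (forall k, A k 0%N = (k == 0%N)%:R + a * (k == 1%N)%:R) ->
  (forall i j, imul B A i j = iid i j) ->
  forall i, B i.+1 0%N + a * B i.+1 1%N = 0.
Proof.
move=> HA BA i; have := BA i.+1 0%N.
rewrite imulE big_nat_recl // big_nat_recl // big1_seq; last first.
  by move=> k _; rewrite HA /= mulr0 add0r mulr0.
rewrite !HA /= mulr0 addr0 mulr1 add0r mulr1 addr0 mulrC => ->.
by [].
Qed.

Lemma B00 (A B : imx) : A 0%N 0%N = 1 ->
  (forall i j, imul B A i j = iid i j) -> B 0%N 0%N = 1.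
Proof. by move=> HA BA; have := BA 0%N 0%N; rewrite imulE big_nat1 HA mulr1. Qed.

Definition qN (i j : nat) : nat := if (j <= i)%N then 'C(2 * i - j, i) else 0%N.

Lemma qN_rec i j : qN i.+1 j.+1 = (qN i j + qN i.+1 j.+2)%N.
Proof.
rewrite /qN !ltnS; case: (ltngtP j i) => h.
- have -> : (2 * i.+1 - j.+1 = (2 * i - j).+1)%N by lia.
  have -> : (2 * i.+1 - j.+2 = 2 * i - j)%N by lia.
  by rewrite binS addnC.
- by [].
- rewrite h addn0.
  have -> : (2 * i.+1 - i.+1 = i.+1)%N by lia.
  have -> : (2 * i - i = i)%N by lia.
  by rewrite !binn.
Qed.

Lemma qN_col0 i : qN i.+1 0%N = (2 * qN i.+1 1%N)%N.
Proof.
rewrite /qN /= subn0.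
have -> : (2 * i.+1 = (2 * i).+1.+1)%N by lia.
rewrite binS subSS subn0.
have -> : 'C((2 * i).+1, i) = 'C((2 * i).+1, i.+1).
  by rewrite -bin_sub; [congr 'C(_, _); lia | lia].
by rewrite addnn -mul2n.
Qed.

Lemma qN_low i j : (i < j)%N -> qN i j = 0%N.
Proof. by rewrite /qN ltnNge => /negbTE ->. Qed.

Definition RecP (M : imx) := forall i j, M i.+1 j.+1 = M i j + M i.+1 j.+2.

Lemma uniq_rec (c : rat) (M N : imx) : lower_tri M -> lower_tri N ->
  M 0%N 0%N = N 0%N 0%N -> RecP M -> RecP N ->
  (forall i, M i.+1 0%N = c * M i.+1 1%N) ->
  (forall i, N i.+1 0%N = c * N i.+1 1%N) ->
  forall i j, M i j = N i j.
Proof.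
move=> lM lN h00 rM rN cM cN i; elim: i => [|i IH].
  by case=> [//|j]; rewrite lM // lN.
suff H : forall j, M i.+1 j.+1 = N i.+1 j.+1.
  by case=> [|j]; rewrite ?cM ?cN H.
suff H : forall n j, (i.+1 <= j + n)%N -> M i.+1 j.+1 = N i.+1 j.+1.
  by move=> j; apply: (H i.+1); lia.
elim=> [|n IHn] j hj.
  by rewrite lM ?lN //; rewrite addn0 in hj; rewrite ltnS.
rewrite rM rN IH IHn //; lia.
Qed.

Definition qc (i j : nat) : rat := (qN i j)%:R.
Definition rc (i j : nat) : rat := qc i j - 2%:R * qc i j.+1.

Lemma qc_low : lower_tri qc.
Proof. by move=> i j h; rewrite /qc qN_low. Qed.
Lemma rc_low : lower_tri rc.
Proof. by move=> i j h; rewrite /rc !qc_low ?subr0 ?mulr0 ?subr0 //; lia. Qed.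
Lemma qc_rec : RecP qc.
Proof. by move=> i j; rewrite /qc qN_rec natrD. Qed.
Lemma rc_rec : RecP rc.
Proof. by move=> i j; rewrite /rc (qc_rec i j) (qc_rec i j.+1); ring. Qed.
Lemma qc_col0 i : qc i.+1 0%N = 2%:R * qc i.+1 1%N.
Proof. by rewrite /qc qN_col0 natrM. Qed.
Lemma rc_col0 i : rc i.+1 0%N = 0 * rc i.+1 1%N.
Proof. by rewrite /rc qc_col0 subrr mul0r. Qed.

Lemma qN1 n : qN n.+1 1%N = ('C(2 * n, n.+1) + 'C(2 * n, n))%N.
Proof.
rewrite /qN ltnS leq0n.
have -> : (2 * n.+1 - 1 = (2 * n).+1)%N by lia.
by rewrite binS.
Qed.

Lemma qN2 n : qN n.+1 2%N = 'C(2 * n, n.+1).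
Proof.
rewrite /qN; case: n => [|n] //.
rewrite ltnS ltnS leq0n.
by have -> : (2 * n.+2 - 2 = 2 * n.+1)%N by lia.
Qed.

Lemma binX n : (n.+1 * 'C(2 * n, n.+1) = n * 'C(2 * n, n))%N.
Proof. by rewrite mul_bin_left; congr (_ * _)%N; lia. Qed.

Theorem theorem3p2 (Finv Linv : imx) :
  is_inverse FS Finv -> is_inverse LS Linv ->
  let r := imul (imul Dmx Finv) Dmx in
  let q := imul (imul Dmx Linv) Dmx in
  (r 0%N 0%N = 1 /\
   (forall i, (0 < i)%N -> r i 0%N = 0) /\
   (forall i, (0 < i)%N -> r i 1%N = (i%:R)^-1 * ('C(2 * i - 2, i - 1))%:R) /\
   (forall i j, (0 < i)%N -> (2 <= j)%N -> r i j = - r i.-1 (j - 2)%N + r i j.-1))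
  /\
  ((forall i, q i 0%N = ('C(2 * i, i))%:R) /\
   (forall i, (0 < i)%N -> q i 1%N = 2%:R^-1 * ('C(2 * i, i))%:R) /\
   (forall i j, (0 < i)%N -> (2 <= j)%N -> q i j = - q i.-1 (j - 2)%N + q i j.-1)).
Proof.
move=> [lF [FF1 FF2]] [lL [LL1 LL2]] r q.
have lFS : lower_tri FS := rlower 1.
have lLS : lower_tri LS := rlower _.
have dFS : forall i, FS i i = 1 by apply: rdiag; rewrite coef1.
have dLS : forall i, LS i i = 1.
  by apply: rdiag; rewrite coefD coef1 coefZ coefX mulr0 addr0.
have recF := @Brec FS Finv lFS dFS (rA1 _) (rA2 _) FF1.
have recL := @Brec LS Linv lLS dLS (rA1 _) (rA2 _) LL1.
have c0F : forall i, Finv i.+1 0%N + 0 * Finv i.+1 1%N = 0.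
  apply: (@col0 FS) => // k.
  by rewrite /FS rcol0 coef1 mul0r addr0.
have c0L : forall i, Linv i.+1 0%N + 2%:R * Linv i.+1 1%N = 0.
  apply: (@col0 LS) => // k.
  by rewrite /LS rcol0 coefD coef1 coefZ coefX.
have F00 : Finv 0%N 0%N = 1 by apply: (@B00 FS) => //; apply: dFS.
have L00 : Linv 0%N 0%N = 1 by apply: (@B00 LS) => //; apply: dLS.
pose sF i j := (-1) ^+ (i + j) * Finv i j.
pose sL i j := (-1) ^+ (i + j) * Linv i j.
have rE : forall i j, r i j = sF i j by move=> i j; rewrite /r conjD.
have qE : forall i j, q i j = sL i j by move=> i j; rewrite /q conjD.
have rR : forall i j, r i j = rc i j.
  move=> i j; rewrite rE; apply: (@uniq_rec 0).
  - by move=> a b h; rewrite /sF lF // mulr0.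
  - exact: rc_low.
  - by rewrite /sF F00 /rc /qc /qN /= bin0 mulr0 subr0 mulr1.
  - move=> a b; rewrite /sF -(recF a b) !addSn !addnS !exprS; ring.
  - exact: rc_rec.
  - move=> a; rewrite /sF; have := c0F a; rewrite mul0r addr0 => ->.
    by rewrite mulr0 mul0r.
  - exact: rc_col0.
have qR : forall i j, q i j = qc i j.
  move=> i j; rewrite qE; apply: (@uniq_rec 2%:R).
  - by move=> a b h; rewrite /sL lL // mulr0.
  - exact: qc_low.
  - by rewrite /sL L00 /qc /qN /= bin0 mulr1.
  - move=> a b; rewrite /sL -(recL a b) !addSn !addnS !exprS; ring.
  - exact: qc_rec.
  - move=> a; rewrite /sL.
    have -> : Linv a.+1 0%N = - (2%:R * Linv a.+1 1%N).
      by apply/eqP; rewrite -addr_eq0 c0L.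
    rewrite addn0 addn1 !exprS; ring.
  - exact: qc_col0.
split; [split; [|split; [|split]] | split; [|split]].
- by rewrite rR /rc /qc /qN /= bin0 mulr0 subr0.
- by case=> [//|i] _; rewrite rR rc_col0 mul0r.
- case=> [//|n] _; rewrite rR /rc /qc qN1 qN2 natrD.
  have -> : (2 * n.+1 - 2 = 2 * n)%N by lia.
  rewrite subn1 /=.
  have hX : ('C(2 * n, n.+1))%:R = n%:R * ('C(2 * n, n))%:R / (n.+1)%:R :> rat.
    rewrite -natrM -binX natrM mulrC mulKf //.
    by rewrite pnatr_eq0.
  rewrite hX; field.
  by rewrite nat1r pnatr_eq0.
- move=> [|i] [|[|j]] // _ _.
  have -> : (j.+2 - 2 = j)%N by lia.
  rewrite !rR /= (rc_rec i j); ring.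
- by move=> i; rewrite qR /qc /qN leq0n subn0.
- case=> [//|i] _; rewrite !qR.
  have h0 := qc_col0 i.
  have e0 : qc i.+1 0%N = ('C(2 * i.+1, i.+1))%:R by rewrite /qc /qN leq0n subn0.
  rewrite e0 in h0; rewrite h0; by field.
- move=> [|i] [|[|j]] // _ _.
  have -> : (j.+2 - 2 = j)%N by lia.
  rewrite !qR /= (qc_rec i j); ring.
Qed.
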